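(* Assume $\mathrm{char}(\mathbb{F})=p>0$, let $0\neq h\in\mathbb{F}[x]$, and regard $A_h\subseteq A_1$ via $x\mapsto x$, $\hat y\mapsto yh$. Then $A_h$ is a free module over its center $Z(A_h)=\mathbb{F}[x^p,h^py^p]$, with basis $\{x^ih^jy^j: 0\le i,j<p\}$.
   Context: For $h\in\mathbb{F}[x]$, $A_h$ is the unital associative $\mathbb{F}$-algebra generated by $x,\hat y$ with defining relation $\hat yx-x\hat y=h$. $A_1$ is the Weyl algebra, generated by $x,y$ with $yx-xy=1$; for $h\ne0$, $x\mapsto x,\ \hat y\mapsto yh$ embeds $A_h$ into $A_1$, and for each $j\ge0$ the element $h^jy^j\in A_1$ lies in $A_h$. *)

(* Defs.v *)
From HB Require Import structures.
From mathcomp Require Import all_boot all_order all_algebra.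
Set Implicit Arguments. Unset Strict Implicit. Unset Printing Implicit Defensive.
Import GRing.Theory.
Local Open Scope ring_scope.

(* Concrete model of the Weyl algebra A_1 = F<x,y>/(yx - xy - 1).
   An element is stored in normal form  sum_j f_j(x) y^j  (x's to the left),
   as a polynomial in y (outer variable) with coefficients f_j in F[x]:
   the j-th coefficient of  a : {poly {poly F}}  is f_j. *)
Definition weyl (F : fieldType) := {poly {poly F}}.

(* Product of normal forms, using  y^i g = sum_k C(i,k) g^(k) y^(i-k):
   (f y^i)(g y^j) = sum_k C(i,k) f g^(k) y^(i-k+j). *)
Definition wmul (F : fieldType) (a b : {poly {poly F}}) : {poly {poly F}} :=
  \sum_(i < size a) \sum_(j < size b) \sum_(k < i.+1)
     ((a`_i * (b`_j)^`(k)) *+ 'C(i, k))%:P * 'X^(i - k + j).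

Definition wx (F : fieldType) : {poly {poly F}} := ('X : {poly F})%:P.
Definition wy (F : fieldType) : {poly {poly F}} := 'X.
Definition wpoly (F : fieldType) (f : {poly F}) : {poly {poly F}} := f%:P.

Inductive in_Ah (F : fieldType) (h : {poly F}) : {poly {poly F}} -> Prop :=
| Ah_scal (c : F) : in_Ah h (c%:P%:P)
| Ah_x : in_Ah h (wx F)
| Ah_yhat : in_Ah h (wmul (wy F) (wpoly h))
| Ah_add a b : in_Ah h a -> in_Ah h b -> in_Ah h (a + b)
| Ah_mul a b : in_Ah h a -> in_Ah h b -> in_Ah h (wmul a b).

Definition in_center (F : fieldType) (h : {poly F}) (z : {poly {poly F}}) : Prop :=
  in_Ah h z /\ forall a, in_Ah h a -> wmul z a = wmul a z.

Inductive in_Zgen (F : fieldType) (h : {poly F}) (p : nat) : {poly {poly F}} -> Prop :=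
| Zg_scal (c : F) : in_Zgen h p (c%:P%:P)
| Zg_xp : in_Zgen h p (wpoly ('X ^+ p))
| Zg_hyp : in_Zgen h p (wpoly (h ^+ p) * 'X^p)
| Zg_add a b : in_Zgen h p a -> in_Zgen h p b -> in_Zgen h p (a + b)
| Zg_mul a b : in_Zgen h p a -> in_Zgen h p b -> in_Zgen h p (wmul a b).

(* The basis element x^i h^j y^j of A_1 (already in normal form) *)
Definition wbasis (F : fieldType) (h : {poly F}) (i j : nat) : {poly {poly F}} :=
  wpoly ('X ^+ i * h ^+ j) * 'X^j.

(* Main.v *)
Require Import Defs.
From HB Require Import structures.
From mathcomp Require Import all_boot all_order all_algebra.
From mathcomp Require Import ring zify.
Import GRing.Theory.
Local Open Scope ring_scope.

Section General.
Variable (R : comNzRingType) (p : nat) (p_gt0 : (0 < p)%N).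

Definition sparse (q : {poly R}) := forall m, ~~ (p %| m)%N -> q`_m = 0.

Lemma poly_big {a : {poly R}} {n} : (size a <= n)%N ->
  a = \sum_(i < n) (a`_i)%:P * 'X^i.
Proof.
move=> sa; under eq_bigr => i _ do rewrite mul_polyC.
rewrite -poly_def; apply/polyP => k; rewrite coef_poly.
by case: ltnP => // /(leq_trans sa) /leq_sizeP ->.
Qed.

Lemma prodE (a b : {poly R}) n m : (size a <= n)%N -> (size b <= m)%N ->
  a * b = \sum_(i < n) \sum_(j < m) (a`_i * b`_j)%:P * 'X^(i + j).
Proof.
move=> sa sb; rewrite {1}(poly_big sa) {1}(poly_big sb) mulr_suml.
apply: eq_bigr => i _; rewrite mulr_sumr; apply: eq_bigr => j _.
by rewrite polyCM exprD; ring.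
Qed.

Lemma coef_split (Q : 'I_p -> {poly R}) n :
  (forall j, sparse (Q j)) ->
  (\sum_(j < p) 'X^j * Q j)`_n = (Q (Ordinal (ltn_pmod n p_gt0)))`_(n %/ p * p).
Proof.
move=> sQ; rewrite coef_sum (bigD1 (Ordinal (ltn_pmod n p_gt0))) //= big1 ?addr0.
  rewrite coefXnM ltnNge leq_mod /=; congr (_`_ _).
  by rewrite {1}(divn_eq n p) addnK.
move=> j /eqP nj; rewrite coefXnM; case: ltnP => // jn.
apply: sQ; apply/negP => pd; apply: nj; apply: val_inj => /=.
move: pd; rewrite -eqn_mod_dvd // => /eqP ->.
by rewrite modn_small.
Qed.

Lemma split_uniq (Q : 'I_p -> {poly R}) :
  (forall j, sparse (Q j)) -> \sum_(j < p) 'X^j * Q j = 0 -> forall j, Q j = 0.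
Proof.
move=> sQ H j; apply/polyP => m; rewrite coef0.
case pm: (p %| m)%N; last by apply: sQ; rewrite pm.
have := congr1 (fun q : {poly R} => q`_(m + j)) H.
rewrite coef0 coef_split //.
have e1 : ((m + j) %/ p * p)%N = m.
  by rewrite divnDl // (divn_small (ltn_ord j)) addn0 divnK.
have e2 : Ordinal (ltn_pmod (m + j) p_gt0) = j.
  apply: val_inj => /=; rewrite -(divnK pm) modnMDl modn_small //.
by rewrite e1 e2.
Qed.

Definition sect (i : nat) (q : {poly R}) :=
  \poly_(m < size q) (if (p %| m)%N then q`_(m + i) else 0).

Lemma sect_sparse i q : sparse (sect i q).
Proof. by move=> m /negbTE pm; rewrite coef_poly pm; case: ifP. Qed.

Lemma split_poly q : q = \sum_(i < p) 'X^i * sect i q.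
Proof.
apply/polyP => n; rewrite coef_split; last by move=> j; apply: sect_sparse.
rewrite coef_poly /= dvdn_mull // -divn_eq.
case: ltnP => // H; apply/leq_sizeP: (leq_trans H (leq_trunc_div n p)).
by [].
Qed.

End General.
Arguments sparse {R} p q.
Arguments poly_big {R a n}.
Arguments prodE {R a b n m}.
Arguments sect {R} p i q.
Arguments coef_split {R p} p_gt0 Q n.
Arguments split_uniq {R p} p_gt0 Q.
Arguments split_poly {R p} p_gt0 q.
Arguments sect_sparse {R p} i q.


Section Weyl.
Variable (F : fieldType) (p : nat) (charFp : p \in [pchar F]).

Lemma p_prime : prime p. Proof. exact: pcharf_prime charFp. Qed.
Lemma p_gt0 : (0 < p)%N. Proof. exact: prime_gt0 p_prime. Qed.

Lemma natF0 n : (p %| n)%N -> (n%:R : F) = 0.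
Proof. by rewrite (dvdn_pcharf charFp) => /eqP. Qed.

Lemma mulrn_p (g : {poly F}) n : (p %| n)%N -> g *+ n = 0.
Proof. by move=> pn; rewrite -mulr_natr -polyC_natr natF0 // mulr0. Qed.

Lemma mulrn_reg (g : {poly F}) n : ~~ (p %| n)%N -> g *+ n = 0 -> g = 0.
Proof.
move=> pn; rewrite -mulr_natr -polyC_natr => /eqP; rewrite mulf_eq0 polyC_eq0.
by rewrite -(dvdn_pcharf charFp) (negbTE pn) orbF => /eqP.
Qed.

Lemma mulrnF_reg (c : F) n : ~~ (p %| n)%N -> c *+ n = 0 -> c = 0.
Proof.
move=> pn; rewrite -mulr_natr => /eqP; rewrite mulf_eq0.
by rewrite -(dvdn_pcharf charFp) (negbTE pn) orbF => /eqP.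
Qed.

Lemma derivn_bin0 (g : {poly F}) i k : (p %| i)%N -> (0 < k)%N ->
  g^`(k) *+ 'C(i, k) = 0.
Proof.
move=> pi; case: k => // k _.
rewrite nderivn_def -mulrnA mulnC bin_ffact ffactnS mulrn_p //.
exact: dvdn_mulr.
Qed.

Lemma deriv0_sparse (q : {poly F}) : q^`() = 0 -> sparse p q.
Proof.
move=> dq [|m] pm; first by rewrite dvdn0 in pm.
have := congr1 (fun r : {poly F} => r`_m) dq; rewrite coef_deriv coef0.
exact: mulrnF_reg pm.
Qed.

Definition wterm (a b : {poly {poly F}}) (i j k : nat) : {poly {poly F}} :=
  ((a`_i * (b`_j)^`(k)) *+ 'C(i, k))%:P * 'X^(i - k + j).

Lemma wmulE (a b : {poly {poly F}}) n m : (size a <= n)%N -> (size b <= m)%N ->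
  wmul a b = \sum_(i < n) \sum_(j < m) \sum_(k < i.+1) wterm a b i j k.
Proof.
move=> sa sb.
have -> : wmul a b = \sum_(i < size a) \sum_(j < size b) \sum_(k < i.+1) wterm a b i j k by [].
rewrite (big_ord_widen _ (fun i => \sum_(j < size b) \sum_(k < i.+1) wterm a b i j k) sa) big_mkcond /=.
apply: eq_bigr => i _; case: ltnP => ia; last first.
  rewrite big1 // => j _; rewrite big1 // => k _.
  by rewrite /wterm (nth_default _ ia) mul0r mul0rn polyC0 mul0r.
rewrite (big_ord_widen _ (fun j => \sum_(k < i.+1) wterm a b i j k) sb) big_mkcond /=.
apply: eq_bigr => j _; case: ltnP => jb //.
rewrite big1 // => k _.
by rewrite /wterm (nth_default _ jb) derivn_poly0 ?size_poly0 // mulr0 mul0rn polyC0 mul0r.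
Qed.
Arguments wmulE {a b n m}.


Lemma derivS0 (g : {poly F}) k : g^`() = 0 -> g^`(k.+1) = 0.
Proof. by move=> dg; elim: k => [|k IH]; rewrite ?derivn1 // derivnS IH deriv0. Qed.

Lemma wmul_cent (a b : {poly {poly F}}) : sparse p a -> wmul a b = a * b.
Proof.
move=> sa; rewrite (wmulE (leqnn _) (leqnn _)) (prodE (leqnn _) (leqnn _)).
apply: eq_bigr => i _; apply: eq_bigr => j _.
rewrite big_ord_recl big1 => [|k _].
  by rewrite /wterm subn0 derivn0 bin0 mulr1n addr0.
rewrite /wterm -mulrnAr; case pi: (p %| i)%N.
  by rewrite derivn_bin0 // mulr0 polyC0 mul0r.
by rewrite sa ?pi // mul0r polyC0 mul0r.
Qed.

Lemma wmul_dcent (a b : {poly {poly F}}) : (forall j, (b`_j)^`() = 0) -> wmul a b = a * b.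
Proof.
move=> db; rewrite (wmulE (leqnn _) (leqnn _)) (prodE (leqnn _) (leqnn _)).
apply: eq_bigr => i _; apply: eq_bigr => j _.
rewrite big_ord_recl big1 => [|k _].
  by rewrite /wterm subn0 derivn0 bin0 mulr1n addr0.
by rewrite /wterm lift0 derivS0 // mulr0 mul0rn polyC0 mul0r.
Qed.

Lemma wmul_polyCl (f : {poly F}) (b : {poly {poly F}}) : wmul f%:P b = f%:P * b.
Proof.
apply: wmul_cent => i pi; rewrite coefC; case: eqP => // i0.
by rewrite i0 dvdn0 in pi.
Qed.

Lemma wmul_wx (z : {poly {poly F}}) : wmul z (wx F) = z * wx F + z^`().
Proof.
rewrite (@wmulE z (wx F) (size z) 1 (leqnn _)) ?size_polyC_leq1 //.
have inner : forall i : 'I_(size z), \sum_(j < 1) \sum_(k < i.+1) wterm z (wx F) i j k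
   = (z`_i * 'X)%:P * 'X^i + (z`_i *+ i)%:P * 'X^(i.-1).
  move=> [[|i] /= _]; rewrite big_ord1.
    by rewrite big_ord1 /wterm /wx coefC /= bin0 mulr1n mulr0n polyC0 mul0r addr0.
  rewrite !big_ord_recl big1 ?addr0 => [|k _].
    by rewrite /wterm /wx coefC /= derivX bin0 bin1 mulr1n mulr1 subn0 !addn0 subSS subn0.
  by rewrite /wterm /wx !lift0 coefC /= -!derivnS derivn_poly0 ?size_polyX // mulr0 mul0rn polyC0 mul0r.
rewrite (eq_bigr _ (fun i _ => inner i)) big_split /=; congr (_ + _).
  rewrite (prodE (leqnn _) (size_polyC_leq1 _)); apply: eq_bigr => i _.
  by rewrite big_ord1 addn0 /wx coefC.
have sd : (size z^`() <= size z)%N.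
  by case: (eqVneq z 0) => [->|/lt_size_deriv/ltnW //]; rewrite deriv0.
rewrite (poly_big sd); case E: (size z) => [|s]; first by rewrite !big_ord0.
rewrite big_ord_recl big_ord_recr /= mulr0n polyC0 mul0r add0r coef_deriv.
rewrite (nth_default _ (_ : (size z <= s.+1)%N)) ?E // mul0rn polyC0 mul0r addr0.
by apply: eq_bigr => i _; rewrite coef_deriv.
Qed.

Lemma yhatE (h : {poly F}) : wmul (wy F) (wpoly h) = h%:P * 'X + (h^`())%:P.
Proof.
rewrite (@wmulE _ _ 2 1) ?size_polyX ?size_polyC_leq1 //.
rewrite !big_ord_recl !big_ord0 /= /wterm /wy /wpoly !coefX !coefC /=.
rewrite mul0r mul0rn polyC0 mul0r !addr0 add0r !mul1r /bump /=.
by rewrite bin0 binn !mulr1n expr0 mulr1 expr1.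
Qed.

Lemma wmul_yhat (h : {poly F}) (z : {poly {poly F}}) :
  wmul (h%:P * 'X + (h^`())%:P) z =
  (h^`())%:P * z + h%:P * 'X * z + h%:P * \poly_(j < size z) ((z`_j)^`()).
Proof.
rewrite (@wmulE _ _ 2 (size z)) //; last first.
  by rewrite size_MXaddC; case: ifP => // _; rewrite ltnS size_polyC_leq1.
rewrite !big_ord_recl big_ord0 addr0 /=.
have c0 : (h%:P * 'X + (h^`())%:P)`_0 = h^`().
  by rewrite coefD coefMX /= coefC /= add0r.
have c1 : (h%:P * 'X + (h^`())%:P)`_1 = h by rewrite coefD coefMX /= !coefC /= addr0.
have zE := @poly_big _ z (size z) (leqnn _).
have -> : (h^`())%:P * z = \sum_(j < size z) (h^`() * z`_j)%:P * 'X^j.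
  by rewrite {1}zE mulr_sumr; apply: eq_bigr => j _; rewrite polyCM mulrA.
have -> : h%:P * 'X * z = \sum_(j < size z) (h * z`_j)%:P * 'X^(1 + j).
  by rewrite {1}zE mulr_sumr; apply: eq_bigr => j _; rewrite polyCM exprD expr1; ring.
have -> : h%:P * \poly_(j < size z) ((z`_j)^`()) = \sum_(j < size z) (h * (z`_j)^`())%:P * 'X^j.
  by rewrite poly_def mulr_sumr; apply: eq_bigr => j _; rewrite -mul_polyC polyCM mulrA.
rewrite -addrA -!big_split /=; apply: eq_bigr => j _.
rewrite big_ord1 !big_ord_recl big_ord0 addr0 /wterm /bump /= c0 c1.
by rewrite bin0 binn !mulr1n !subn0 subnn !add0n addn0.
Qed.

Variable (h : {poly F}) (hnz : h != 0).

Definition inS (a : {poly {poly F}}) := forall m, h ^+ m %| a`_m.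

Lemma inS0 : inS 0. Proof. by move=> m; rewrite coef0 dvdp0. Qed.
Lemma inS_add a b : inS a -> inS b -> inS (a + b).
Proof. by move=> Ha Hb m; rewrite coefD dvdp_add. Qed.
Lemma inS_sum (I : Type) (r : seq I) (P : pred I) (E : I -> {poly {poly F}}) :
  (forall i, P i -> inS (E i)) -> inS (\sum_(i <- r | P i) E i).
Proof. by move=> H; apply: big_ind => //; [exact: inS0 | exact: inS_add]. Qed.
Lemma inS_monom (c : {poly F}) n : h ^+ n %| c -> inS (c%:P * 'X^n).
Proof.
move=> Hc m; rewrite coefCM coefXn; case: eqP => [->|_]; first by rewrite mulr1.
by rewrite mulr0 dvdp0.
Qed.

Lemma dvd_deriv (g : {poly F}) n : h ^+ n %| g -> h ^+ n.-1 %| g^`().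
Proof.
case/dvdpP => q ->; rewrite derivM deriv_exp; apply: dvdp_add.
  case: n => [|n]; first by rewrite expr0 dvd1p.
  by rewrite exprS mulrA dvdp_mull.
by rewrite mulrnAr -mulr_natr dvdp_mulr // mulrA dvdp_mull ?dvdpp.
Qed.

Lemma dvd_derivn (g : {poly F}) j k : h ^+ j %| g -> h ^+ (j - k) %| g^`(k).
Proof.
move=> Hg; elim: k => [|k IH]; first by rewrite subn0 derivn0.
by rewrite derivnS subnS; apply: dvd_deriv.
Qed.

Lemma inS_wmul a b : inS a -> inS b -> inS (wmul a b).
Proof.
move=> Ha Hb; rewrite (wmulE (leqnn _) (leqnn _)).
apply: inS_sum => i _; apply: inS_sum => j _; apply: inS_sum => k _.
apply: inS_monom; rewrite -mulr_natr; apply: dvdp_mulr.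
have ki : (k <= i)%N by rewrite -ltnS.
case: (leqP k j) => kj.
  have -> : (i - k + j = i + (j - k))%N by lia.
  by rewrite exprD dvdp_mul // dvd_derivn.
apply: dvdp_mulr; apply: (@dvdp_trans _ (h ^+ i)); last exact: Ha.
apply: dvdp_exp2l; lia.
Qed.

Lemma Ah_inS a : in_Ah h a -> inS a.
Proof.
elim=> [c| | |a1 b1 _ Ha _ Hb|a1 b1 _ Ha _ Hb].
- move=> [|m]; rewrite coefC ?expr0 ?dvd1p //= dvdp0.
- move=> [|m]; rewrite /wx coefC ?expr0 ?dvd1p //= dvdp0.
- rewrite yhatE => m; rewrite coefD coefMX.
  case: m => [|[|m]] /=; rewrite ?expr0 ?dvd1p //.
    by rewrite !coefC /= addr0 expr1 dvdpp.
  by rewrite !coefC /= addr0 dvdp0.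
- exact: inS_add.
- exact: inS_wmul.
Qed.

Lemma Ah0 : in_Ah h 0.
Proof. by have := Ah_scal h 0; rewrite !polyC0. Qed.

Lemma Ah_sum (I : Type) (r : seq I) (P : pred I) (E : I -> {poly {poly F}}) :
  (forall i, P i -> in_Ah h (E i)) -> in_Ah h (\sum_(i <- r | P i) E i).
Proof. by move=> H; apply: big_ind => //; [exact: Ah0 | exact: Ah_add]. Qed.

Lemma Ah_polyC (f : {poly F}) : in_Ah h f%:P.
Proof.
elim/poly_ind: f => [|f c IH]; first by rewrite polyC0; exact: Ah0.
rewrite polyCD; apply: Ah_add; last exact: Ah_scal.
rewrite polyCM -wmul_polyCl; exact: Ah_mul IH (Ah_x h).
Qed.

Lemma Ah_E m : in_Ah h ((h ^+ m)%:P * 'X^m).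
Proof.
elim: m => [|m IH]; first by rewrite expr0 expr0 mulr1 -polyC1; exact: Ah_scal.
set E := (h ^+ m)%:P * 'X^m in IH *.
have DE : \poly_(j < size E) ((E`_j)^`()) = ((h ^+ m)^`())%:P * 'X^m.
  apply/polyP => j; rewrite coef_poly coefCM coefXn.
  have -> : (h ^+ m)^`() * (j == m)%:R = ((h ^+ m) * (j == m)%:R)^`().
    by case: (j == m); rewrite ?mulr1 ?mulr0 ?deriv0.
  have -> : h ^+ m * (j == m)%:R = E`_j by rewrite /E coefCM coefXn.
  by case: ltnP => // /leq_sizeP -> //; rewrite deriv0.
have key := wmul_yhat h E; rewrite DE in key.
have -> : (h ^+ m.+1)%:P * 'X^(m.+1) =
  wmul (wmul (wy F) (wpoly h)) E + wmul ((- (h^`() + h^`() *+ m))%:P) E.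
  rewrite yhatE key wmul_polyCl deriv_exp /E.
  case: m {IH E DE key} => [|m].
    by rewrite !mulr0n addr0 expr0 expr1 !polyC1; ring.
  rewrite !exprS !polyCM polyCN polyCD !polyCMn; ring.
exact: Ah_add (Ah_mul (Ah_yhat h) IH) (Ah_mul (Ah_polyC _) IH).
Qed.

Lemma inS_Ah a : inS a -> in_Ah h a.
Proof.
move=> Ha; rewrite (@poly_big _ a (size a) (leqnn _)); apply: Ah_sum => i _.
have := Ha i; move/divpK => <-.
rewrite polyCM -mulrA -wmul_polyCl; exact: Ah_mul (Ah_polyC _) (Ah_E i).
Qed.

Definition cform (z : {poly {poly F}}) := sparse p z /\ (forall i, (z`_i)^`() = 0).

Lemma center_iff z : in_center h z <-> inS z /\ cform z.
Proof.
split=> [[Hz Hc]|[Sz [sz dz]]]; last first.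
  split; first exact: inS_Ah.
  by move=> a _; rewrite wmul_cent // wmul_dcent // mulrC.
split; first exact: Ah_inS.
have Dz : z^`() = 0.
  apply: (addrI (z * wx F)); rewrite addr0 -wmul_wx (Hc _ (Ah_x h)).
  by rewrite /wx wmul_polyCl mulrC.
have sz : sparse p z.
  move=> [|m] pm; first by rewrite dvdn0 in pm.
  have := congr1 (fun r : {poly {poly F}} => r`_m) Dz; rewrite coef_deriv coef0.
  exact: mulrn_reg pm.
split=> // i.
have := Hc _ (Ah_yhat h); rewrite yhatE wmul_yhat wmul_cent //.
move=> H.
have H2 : h%:P * \poly_(j < size z) ((z`_j)^`()) = 0.
  apply: (addrI ((h^`())%:P * z + h%:P * 'X * z)); rewrite addr0 -H; ring.
move/eqP: H2; rewrite mulf_eq0 polyC_eq0 (negbTE hnz) /= => /eqP H3.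
have := congr1 (fun r : {poly {poly F}} => r`_i) H3; rewrite coef_poly coef0.
by case: ltnP => // /leq_sizeP -> //; rewrite deriv0.
Qed.

Lemma cform_hp : cform ((h ^+ p)%:P * 'X^p).
Proof.
split=> [m pm|i]; rewrite coefCM coefXn.
  by case: eqP => [e|_]; [rewrite e dvdnn in pm | rewrite mulr0].
case: eqP => _; rewrite ?mulr1 ?mulr0 ?deriv0 //.
by rewrite deriv_exp mulrn_p.
Qed.

Lemma Zgen_cform z : in_Zgen h p z -> inS z /\ cform z.
Proof.
elim=> [c| | |a b _ [Sa [sa da]] _ [Sb [sb db]]|a b _ [Sa [sa da]] _ [Sb [sb db]]].
- split; first exact: Ah_inS (Ah_scal h c).
  split=> [m pm|i]; rewrite coefC; case: eqP => // e.
    by rewrite e dvdn0 in pm.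
    by rewrite derivC.
  by rewrite deriv0.
- split; first exact: Ah_inS (Ah_polyC _).
  split=> [m pm|i]; rewrite /wpoly coefC; case: eqP => // e.
    by rewrite e dvdn0 in pm.
    by rewrite derivXn mulrn_p.
  by rewrite deriv0.
- split; last exact: cform_hp.
  by apply: inS_monom; rewrite dvdpp.
- split; first exact: inS_add.
  split=> [m pm|i]; first by rewrite coefD sa ?sb ?addr0.
  by rewrite coefD derivD da db addr0.
- rewrite wmul_cent //; split.
    by rewrite -wmul_cent //; exact: inS_wmul.
  split=> [m pm|i].
    rewrite coefM big1 // => j _; case pj: (p %| j)%N; last by rewrite sa ?pj ?mul0r.
    rewrite sb ?mulr0 //; apply/negP => pmj; move/negP: pm; apply.
    have jm : (j <= m)%N by rewrite -ltnS.
    by rewrite -(subnKC jm) dvdn_add.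
  rewrite coefM; apply: (big_ind (fun q : {poly F} => q^`() = 0)) => [|x y dx dy|j _]; rewrite ?deriv0 ?derivD ?dx ?dy ?addr0 //.
  by rewrite derivM da db mul0r mulr0 addr0.
Qed.

Lemma Zg0 : in_Zgen h p 0.
Proof. by have := Zg_scal h p 0; rewrite !polyC0. Qed.

Lemma Zg_sum (I : Type) (r : seq I) (P : pred I) (E : I -> {poly {poly F}}) :
  (forall i, P i -> in_Zgen h p (E i)) -> in_Zgen h p (\sum_(i <- r | P i) E i).
Proof. by move=> H; apply: big_ind => //; [exact: Zg0 | exact: Zg_add]. Qed.

Lemma Zg_xpow k : in_Zgen h p (('X^(p * k))%:P).
Proof.
elim: k => [|k IH]; first by rewrite muln0 expr0 -polyC1; exact: Zg_scal.
rewrite mulnS exprD polyCM -wmul_polyCl; exact: Zg_mul (Zg_xp h p) IH.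
Qed.

Lemma Zg_polyC (q : {poly F}) : sparse p q -> in_Zgen h p q%:P.
Proof.
move=> sq.
have -> : q%:P = \sum_(i < size q) ((q`_i)%:P * 'X^i)%:P.
  by rewrite {1}(@poly_big _ q (size q) (leqnn _)) rmorph_sum.
apply: Zg_sum => i _; case pi: (p %| i)%N; last first.
  by rewrite (sq i) ?pi // polyC0 mul0r polyC0; exact: Zg0.
rewrite polyCM -wmul_polyCl -(divnK pi) mulnC; exact: Zg_mul (Zg_scal _ _ _) (Zg_xpow _).
Qed.

Lemma Zg_ypow k : in_Zgen h p (((h ^+ p)%:P * 'X^p) ^+ k).
Proof.
elim: k => [|k IH]; first by rewrite expr0 -polyC1 -polyC1; exact: Zg_scal.
rewrite exprS -wmul_cent; first exact: Zg_mul (Zg_hyp h p) IH.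
by case: cform_hp.
Qed.

Lemma cform_Zgen z : inS z -> cform z -> in_Zgen h p z.
Proof.
move=> Sz [sz dz]; rewrite (@poly_big _ z (size z) (leqnn _)).
apply: Zg_sum => m _; case pm: (p %| m)%N; last by rewrite sz ?pm // polyC0 mul0r; exact: Zg0.
have := Sz m; move/divpK; set q := z`_m %/ h ^+ m => qE.
have dq : q^`() = 0.
  have := dz m; rewrite -qE derivM deriv_exp mulrn_p // mulr0 addr0 => /eqP.
  by rewrite mulf_eq0 (negbTE (expf_neq0 _ hnz)) orbF => /eqP.
rewrite -qE polyCM -mulrA -(divnK pm) mulnC !exprM polyC_exp -exprMn.
rewrite -wmul_polyCl; apply: Zg_mul (Zg_ypow _).
by apply: Zg_polyC; apply: deriv0_sparse.
Qed.

Lemma deriv_sect i (q : {poly F}) : (sect p i q)^`() = 0.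
Proof.
apply/polyP => k; rewrite coef_deriv coef0.
case pk: (p %| k.+1)%N; first by rewrite -mulr_natr natF0 // mulr0.
by rewrite sect_sparse ?pk // mul0rn.
Qed.

Lemma to_split (c : 'I_p -> 'I_p -> {poly {poly F}}) :
  \sum_(i < p) \sum_(j < p) c i j * wbasis h i j =
  \sum_(j < p) 'X^j * \sum_(i < p) c i j * ('X^i * h ^+ j)%:P.
Proof.
rewrite exchange_big /=; apply: eq_bigr => j _; rewrite mulr_sumr.
by apply: eq_bigr => i _; rewrite /wbasis /wpoly; ring.
Qed.

Lemma Q_sparse (c : 'I_p -> 'I_p -> {poly {poly F}}) :
  (forall i j, sparse p (c i j)) ->
  forall j : 'I_p, sparse p (\sum_(i < p) c i j * ('X^i * h ^+ j)%:P).
Proof.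
move=> sc j m pm; rewrite coef_sum big1 // => i _.
by rewrite coefMC sc // mul0r.
Qed.

Lemma spanning a : in_Ah h a ->
  exists c : 'I_p -> 'I_p -> {poly {poly F}},
       (forall i j, in_center h (c i j)) /\
       a = \sum_(i < p) \sum_(j < p) wmul (c i j) (wbasis h i j).
Proof.
move=> Ha; have Sa := @Ah_inS a Ha.
pose c (i j : 'I_p) : {poly {poly F}} := \poly_(m < size a)
  (if (p %| m)%N then sect p i (a`_(m + j) %/ h ^+ (m + j)) * h ^+ m else 0).
have sc : forall i j, sparse p (c i j).
  by move=> i j m pm; rewrite coef_poly (negbTE pm); case: ifP.
have dc : forall i j k, ((c i j)`_k)^`() = 0.
  move=> i j k; rewrite coef_poly; case: ifP => _; last exact: deriv0.
  case: ifP => pk; last exact: deriv0.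
  by rewrite derivM deriv_sect mul0r add0r deriv_exp mulrn_p // mulr0.
exists c; split.
  move=> i j; apply/center_iff; split; last by split.
  move=> m; rewrite coef_poly; case: ifP => _; last exact: dvdp0.
  by case: ifP => _; [apply: dvdp_mull; exact: dvdpp | exact: dvdp0].
under eq_bigr => i _ do under eq_bigr => j _ do rewrite wmul_cent //.
rewrite to_split; apply/polyP => n.
rewrite (coef_split p_gt0) /=; last exact: Q_sparse.
rewrite coef_sum.
set M := (n %/ p * p)%N.
have nE : (M + n %% p)%N = n by rewrite /M -divn_eq.
under eq_bigr => i _ do rewrite coefMC coef_poly /= nE dvdn_mull //.
case: ltnP => Ma; last first.
  rewrite big1 => [|i _]; last by rewrite mul0r.
  by rewrite nth_default // (leq_trans Ma) // leq_trunc_div.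
set qn := a`_n %/ h ^+ n.
rewrite -(divpK (Sa n)) -/qn {1}(split_poly p_gt0 qn) mulr_suml.
apply: eq_bigr => i _; rewrite -{1}nE exprD; ring.
Qed.

Lemma independence (c : 'I_p -> 'I_p -> {poly {poly F}}) :
  (forall i j, in_center h (c i j)) ->
  \sum_(i < p) \sum_(j < p) wmul (c i j) (wbasis h i j) = 0 ->
  forall i j, c i j = 0.
Proof.
move=> Hc; have cf : forall i j, cform (c i j) by move=> i j; case: (proj1 (center_iff _) (Hc i j)).
under eq_bigr => i _ do under eq_bigr => j _ do rewrite (@wmul_cent (c i j) _ (proj1 (cf i j))).
rewrite to_split => H0.
have HQ := split_uniq p_gt0 _ (Q_sparse c (fun i j => proj1 (cf i j))) H0.
move=> i j; apply/polyP => m; rewrite coef0.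
have := congr1 (fun r : {poly {poly F}} => r`_m) (HQ j).
rewrite coef_sum coef0.
under eq_bigr => k _ do rewrite coefMC.
have -> : \sum_(k < p) (c k j)`_m * ('X^k * h ^+ j) =
          (\sum_(k < p) 'X^k * (c k j)`_m) * h ^+ j.
  by rewrite mulr_suml; apply: eq_bigr => k _; ring.
move/eqP; rewrite mulf_eq0 (negbTE (expf_neq0 _ hnz)) orbF => /eqP H1.
apply: (split_uniq p_gt0 (fun k => (c k j)`_m)) => // k.
by apply: deriv0_sparse; case: (cf k j).
Qed.

End Weyl.

Theorem proposition5p5 (F : fieldType) (p : nat) (charFp : p \in [pchar F])
    (h : {poly F}) (h_neq0 : h != 0) :
  (* Z(A_h) = F[x^p, h^p y^p] *)
  (forall z : {poly {poly F}}, in_center h z <-> in_Zgen h p z) /\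
  (* the basis elements lie in A_h *)
  (forall i j : 'I_p, in_Ah h (wbasis h i j)) /\
  (* they span A_h over Z(A_h) *)
  (forall a, in_Ah h a ->
     exists c : 'I_p -> 'I_p -> {poly {poly F}},
       (forall i j, in_center h (c i j)) /\
       a = \sum_(i < p) \sum_(j < p) wmul (c i j) (wbasis h i j)) /\
  (* and are linearly independent over Z(A_h) *)
  (forall c : 'I_p -> 'I_p -> {poly {poly F}},
     (forall i j, in_center h (c i j)) ->
     \sum_(i < p) \sum_(j < p) wmul (c i j) (wbasis h i j) = 0 ->
     forall i j, c i j = 0).
Proof.
split.
  move=> z; rewrite (@center_iff _ _ charFp _ h_neq0 z); split.
    by case=> Sz cz; apply: (@cform_Zgen _ _ charFp _ h_neq0).
  exact: (@Zgen_cform _ _ charFp _ h_neq0).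
split.
  move=> i j; apply: (@inS_Ah _ _ charFp); apply: inS_monom.
  by apply: dvdp_mull; exact: dvdpp.
split; first exact: (@spanning _ _ charFp _ h_neq0).
exact: (@independence _ _ charFp _ h_neq0).
Qed.
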